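(* Let $\gamma,\sigma:[a,b]\to V$ be continuous paths of bounded variation and let $f:(-\pi,\pi)\to\mathbb{C}$ be bounded and integrable with Fourier coefficients $\phi_k=\frac1{2\pi}\int_{-\pi}^\pi f(x)e^{-ikx}dx$, $k\in\mathbb{Z}$. (1) If $\phi_k=0$ for all $k<0$, then $K_\phi^{\gamma,\sigma}(s,t)=\frac1{2\pi}\int_{-\pi}^\pi K^{e^{-ix}\gamma,\sigma}(s,t)f(x)\,dx$. (2) Suppose $f$ is real-valued with real Fourier series $f=a_0+\sum_{k\ge1}a_k\cos(k\cdot)+\sum_{k\ge1}b_k\sin(k\cdot)$, $a_k,b_k\in\mathbb{R}$. If $\langle p,q\rangle_\phi:=\sum_{k\ge0}a_k\langle p_k,q_k\rangle_k$ and $K_\phi^{\gamma,\sigma}(s,t):=\langle S(\gamma)_{a,s},S(\sigma)_{a,t}\rangle_\phi$, then \[ K_\phi^{\gamma,\sigma}(s,t)=\frac1\pi\int_{-\pi}^\pi\mathcal{R}K_x^{\gamma,\sigma}(s,t)f(x)\,dx-a_0, \] where $\mathcal{R}K_x^{\gamma,\sigma}(s,t)=\operatorname{Re}K^{e^{ix}\gamma,\sigma}(s,t)$.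
   Context: $V$ is a finite-dimensional real inner product space, $\langle\cdot,\cdot\rangle_k$ the induced Hilbert–Schmidt inner product on $V^{\otimes k}$. Signature: $S(\gamma)^0=1$, $S(\gamma)^k_{s,t}=\int_{s<u_1<\dots<u_k<t}d\gamma_{u_1}\otimes\cdots\otimes d\gamma_{u_k}$; $p_k$ is the degree-$k$ component of $p$. Write $c_k(s,t)=\langle S(\gamma)^k_{a,s},S(\sigma)^k_{a,t}\rangle_k$. In (1), $K_\phi^{\gamma,\sigma}(s,t)=\sum_{k\in\mathbb{Z}}\phi_kc_{|k|}(s,t)$. For $w\in\mathbb{C}$, $K^{w\gamma,\sigma}(s,t):=\sum_{k\ge0}w^kc_k(s,t)$. *)

(* Defs.v *)
From HB Require Import structures.
From mathcomp Require Import all_boot all_order all_algebra.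
From mathcomp Require Import all_classical all_reals all_analysis.
From mathcomp Require Import complex.
Set Implicit Arguments. Unset Strict Implicit. Unset Printing Implicit Defensive.
Import Order.TTheory GRing.Theory Num.Theory.
Import numFieldNormedType.Exports.
Local Open Scope classical_set_scope.
Local Open Scope ring_scope.
Local Open Scope complex_scope.

(* V is modelled as R^d = 'rV[R]_d with the standard (Euclidean) inner
   product; the Hilbert--Schmidt inner product on V^{(x)k} is then the sum
   over all words (multi-indices) of length k of products of coordinates. *)

Section Defs.
Variable R : realType.

(* a partition of [a,b] is given by the points s = [:: x1; ...; xn] with
   a = x0 < x1 < ... < xn = b *)
Definition is_partition (a b : R) (s : seq R) : Prop :=
  path <%R a s /\ last a s = b.

Definition mesh (a : R) (s : seq R) : R :=
  \big[Num.max/0]_(i < size s) (nth 0 s i - nth 0 (a :: s) i).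

Definition RS_sum (f g : R -> R) (a : R) (s xi : seq R) : R :=
  \sum_(i < size s) f (nth 0 xi i) * (g (nth 0 s i) - g (nth 0 (a :: s) i)).

Definition is_RS_integral (f g : R -> R) (a b I : R) : Prop :=
  forall e : R, 0 < e -> exists2 delta : R, 0 < delta &
    forall s xi : seq R, is_partition a b s -> size xi = size s ->
      mesh a s < delta ->
      (forall i, (i < size s)%N ->
         nth 0 (a :: s) i <= nth 0 xi i <= nth 0 s i) ->
      `|RS_sum f g a s xi - I| < e.

Definition RSint (f g : R -> R) (a b : R) : R :=
  xget 0 [set I | is_RS_integral f g a b I].

Definition eucl_norm (d : nat) (v : 'rV[R]_d) : R :=
  Num.sqrt (\sum_(j < d) v ord0 j ^+ 2).

Definition path_variation_sum (d : nat) (g : R -> 'rV[R]_d) (a : R)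
  (s : seq R) : R :=
  \sum_(i < size s) eucl_norm (g (nth 0 s i) - g (nth 0 (a :: s) i)).

Definition bounded_variation_path (d : nat) (g : R -> 'rV[R]_d) (a b : R)
  : Prop :=
  exists M : R, forall s, is_partition a b s -> path_variation_sum g a s <= M.

(* sigrev g a [:: i_k; ...; i_1] t  =  S(g)^{i_1 ... i_k}_{a,t}, defined by
   S^{w i}_{a,t} = \int_a^t S^{w}_{a,u} dg^i_u *)
Fixpoint sigrev (d : nat) (g : R -> 'rV[R]_d) (a : R) (w : seq 'I_d) (t : R)
  : R :=
  match w with
  | [::] => 1
  | i :: w' => RSint (fun u => sigrev g a w' u) (fun u => g u ord0 i) a t
  end.

Definition sig_coord (d : nat) (g : R -> 'rV[R]_d) (a : R) (w : seq 'I_d)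
  (t : R) : R := sigrev g a (rev w) t.

Definition sig_ip (d : nat) (gamma sigma : R -> 'rV[R]_d) (a : R) (k : nat)
  (s t : R) : R :=
  \sum_(w : k.-tuple 'I_d) sig_coord gamma a w s * sig_coord sigma a w t.

Definition cvgC (u : nat -> R[i]) (l : R[i]) : Prop :=
  forall e : R, 0 < e -> exists N : nat, forall n : nat, (N <= n)%N ->
    `|u n - l| < e%:C.

Definition limC (u : nat -> R[i]) : R[i] := xget 0 [set l | cvgC u l].

Definition expi (x : R) : R[i] := cos x +i* sin x.

Definition int_pi (f : R -> R) : R :=
  Rintegral (@lebesgue_measure R) `]-pi, pi[ f.

Definition int_piC (f : R -> R[i]) : R[i] :=
  int_pi (fun x => complex.Re (f x)) +i* int_pi (fun x => complex.Im (f x)).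

Definition fourier_coef (f : R -> R[i]) (k : int) : R[i] :=
  ((2 * pi)^-1)%:C * int_piC (fun x => f x * expi (- (k%:~R * x))).

(* K_phi(s,t) = \sum_{k in Z} phi_k c_{|k|}(s,t)  (limit of symmetric sums) *)
Definition K_phi (d : nat) (phi : int -> R[i]) (gamma sigma : R -> 'rV[R]_d)
  (a s t : R) : R[i] :=
  limC (fun N => \sum_(i < (2 * N).+1)
          phi (i%:Z - N%:Z) * (sig_ip gamma sigma a `|i%:Z - N%:Z|%N s t)%:C).

(* K^{w gamma, sigma}(s,t) = \sum_{k >= 0} w^k c_k(s,t) *)
Definition K_w (d : nat) (w : R[i]) (gamma sigma : R -> 'rV[R]_d)
  (a s t : R) : R[i] :=
  limC (fun N => \sum_(k < N) w ^+ k * (sig_ip gamma sigma a k s t)%:C).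

Definition fourier_a (f : R -> R) (k : nat) : R :=
  if k == 0%N then (2 * pi)^-1 * int_pi f
  else pi^-1 * int_pi (fun x => f x * cos (k%:R * x)).

Definition fourier_b (f : R -> R) (k : nat) : R :=
  pi^-1 * int_pi (fun x => f x * sin (k%:R * x)).

Definition K_phi_real (d : nat) (f : R -> R) (gamma sigma : R -> 'rV[R]_d)
  (a s t : R) : R :=
  limn (fun N => \sum_(k < N) fourier_a f k * sig_ip gamma sigma a k s t).

End Defs.

(* Main.v *)
Require Import Defs.
From HB Require Import structures.
From mathcomp Require Import all_boot all_order all_algebra.
From mathcomp Require Import all_classical all_reals all_analysis.
From mathcomp Require Import complex.
From mathcomp Require Import ring lra.
Import Order.TTheory GRing.Theory Num.Theory.
Import numFieldNormedType.Exports.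
Set Implicit Arguments. Unset Strict Implicit. Unset Printing Implicit Defensive.
Local Open Scope classical_set_scope.
Local Open Scope ring_scope.
Local Open Scope complex_scope.

Lemma tail_bound (R : realType) (u rho : R^nat) (B : R) :
  0 <= B -> (forall k, 0 <= rho k) -> (forall k, `|u k| <= B * rho k) ->
  cvgn (series rho) ->
  cvgn (series u) /\ (forall N, `|limn (series u) - series u N| <=
                         B * (limn (series rho) - series rho N)).
Proof.
move=> B0 r0 ur cr.
have crB : cvgn (series (fun k => B * rho k)) by rewrite (_ : (fun k => B * rho k) = B *: rho) //; exact: is_cvg_seriesZ.
have cu : cvgn (series u).
  apply: normed_cvg.
  apply: (@series_le_cvg _ (fun k => `|u k|) (fun k => B * rho k)) => //.
  by move=> n; rewrite mulr_ge0.
split => // N.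
have key : forall M, (N <= M)%N -> `|series u M - series u N| <= B * (limn (series rho) - series rho N).
  move=> M NM; rewrite sub_series_geq//.
  apply: (le_trans (ler_norm_sum _ _ _)).
  apply: (@le_trans _ _ (B * (series rho M - series rho N))).
    rewrite sub_series_geq// mulr_sumr; apply: ler_sum => k _; exact: ur.
  apply: ler_wpM2l => //; rewrite lerB//.
  apply: nondecreasing_cvgn_le => //; exact: nondecreasing_series.
set X := B * _ in key *.
have h1 : series u N - X <= limn (series u).
  apply: limr_ge => //; exists N => // M /= NM.
  by have := key M NM; rewrite ler_norml => /andP[h _]; lra.
have h2 : limn (series u) <= series u N + X.
  apply: limr_le => //; exists N => // M /= NM.
  by have := key M NM; rewrite ler_norml => /andP[_ h]; lra.
rewrite ler_norml; apply/andP; split; lra.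
Qed.

Section Core.
Variable R : realType.
Local Notation D := (`]-pi, pi[%classic : set R).
Local Notation mu := (@lebesgue_measure R).

Lemma mD : measurable D. Proof. exact: measurable_itv. Qed.

Lemma muD : (mu D < +oo)%E.
Proof. by rewrite lebesgue_measure_itv/=; case: ifP => _; rewrite ?ltry. Qed.

Lemma muDE : fine (mu D) = 2 * pi.
Proof.
rewrite lebesgue_measure_itv/= ifT; last by rewrite lte_fin gtrN// pi_gt0.
by rewrite /= opprK -mulr2n mulr_natl.
Qed.

Lemma bnd_int (f : R -> R) (M : R) : measurable_fun D f ->
  (forall x, D x -> `|f x| <= M) -> mu.-integrable D (EFin \o f).
Proof.
move=> mf fM; apply: measurable_bounded_integrable.
- exact: measurable_itv.
- exact: muD.
- exact: mf.
rewrite /bounded_near; near=> M' => x Dx /=; apply: le_trans (fM x Dx) _.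
near: M'; apply: nbhs_pinfty_ge; exact: num_real.
Unshelve. all: by end_near. Qed.

Lemma series0 (u : R^nat) : series u 0 = 0.
Proof. by rewrite /series/= big_geq. Qed.

Lemma core (c rho : R^nat) (h : nat -> R -> R) (B : R) :
  0 <= B -> (forall k, 0 <= rho k) -> (forall k, `|c k| <= rho k) ->
  cvgn (series rho) ->
  (forall k, measurable_fun D (h k)) -> (forall k x, D x -> `|h k x| <= B) ->
  (forall x, D x -> cvgn (series (fun k => c k * h k x))) /\
  (series (fun k => c k * int_pi (h k)) @ \oo -->
     int_pi (fun x => limn (series (fun k => c k * h k x)))).
Proof.
move=> B0 r0 cr crho mh hB.
set S := fun N x => series (fun k => c k * h k x) N.
set H := fun x => limn (series (fun k => c k * h k x)).
set Lr := limn (series rho).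
have tb x : D x -> cvgn (series (fun k => c k * h k x)) /\
    forall N, `|H x - S N x| <= B * (Lr - series rho N).
  move=> Dx; apply: tail_bound => // k.
  by rewrite normrM mulrC; apply: ler_pM => //; exact: hB.
split; first by move=> x /tb[].
have SS N : S N.+1 = fun x => S N x + c N * h N x.
  by apply/funext => x; rewrite /S seriesSr.
have S0 : S 0%N = fun=> 0 by apply/funext => x; rewrite /S series0.
have mS N : measurable_fun D (S N).
  elim: N => [|N IH]; first by rewrite S0; exact: measurable_cst.
  by rewrite SS; apply: measurable_realfun.measurable_funD => //; apply: measurable_realfun.measurable_funM => //; exact: measurable_cst.
have SB N x : D x -> `|S N x| <= B * series rho N.
  move=> Dx; elim: N => [|N IH]; first by rewrite S0 series0 normr0 mulr0.
  rewrite SS /= seriesSr mulrDr; apply: (le_trans (ler_normD _ _)); apply: lerD => //.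
  by rewrite normrM mulrC; apply: ler_pM => //; exact: hB.
have iS N : mu.-integrable D (EFin \o S N) by apply: bnd_int; [exact: mS|exact: SB].
have ih k : mu.-integrable D (EFin \o h k) by apply: bnd_int; [exact: mh|exact: hB].
have lin N : int_pi (S N) = series (fun k => c k * int_pi (h k)) N.
  elim: N => [|N IH].
    by rewrite S0 series0 /int_pi Rintegral_cst ?mul0r//; exact: measurable_itv.
  rewrite SS seriesSr -IH /int_pi RintegralD.
  - by rewrite RintegralZl//; exact: measurable_itv.
  - exact: measurable_itv.
  - exact: iS.
  - apply: bnd_int; first by apply: measurable_realfun.measurable_funM => //; exact: measurable_cst.
    by move=> x Dx; rewrite normrM; apply: ler_wpM2l => //; exact: hB.
have mH : measurable_fun D H.
  apply: (measurable_realfun.measurable_fun_cvg mS) => x Dx; exact: (tb x Dx).1.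
have HB x : D x -> `|H x| <= B * Lr.
  by move=> Dx; have := (tb x Dx).2 0%N; rewrite S0 series0 !subr0.
have iH : mu.-integrable D (EFin \o H) by apply: bnd_int; [exact: mH|exact: HB].
set K := 2 * pi * B.
have K0 : 0 <= K by rewrite /K mulr_ge0// mulr_ge0// pi_ge0.
apply/cvgrPdist_le => e e0.
have e'0 : 0 < e / (K + 1) by rewrite divr_gt0// ltr_wpDl.
have : \forall t \near \oo, `|Lr - series rho t| <= e / (K + 1) by move/cvgrPdist_le : crho; apply.
apply: filterS => n hn.
have rn : series rho n <= Lr.
  apply: (nondecreasing_cvgn_le _ crho); exact: (@nondecreasing_series _ rho xpredT 0%N).

rewrite -lin /int_pi -RintegralB; [|exact: measurable_itv|exact: iH|exact: iS].
apply: (le_trans (le_normr_Rintegral _ _)).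
- exact: measurable_itv.
- apply: bnd_int; first exact: (measurable_realfun.measurable_funB mH (mS n)).
  by move=> x Dx; apply: (le_trans (ler_normB _ _)); apply: lerD; [exact: HB|exact: SB].
apply: (@le_trans _ _ (Rintegral mu D (fun=> B * (Lr - series rho n)))).
  apply: le_Rintegral.
  - exact: measurable_itv.
  - apply: bnd_int; first by apply: measurableT_comp => //; exact: (measurable_realfun.measurable_funB mH (mS n)).
    move=> x Dx; rewrite normr_id; exact: (tb x Dx).2.
  - apply: bnd_int; first exact: measurable_cst.
    by move=> x _; apply: lexx.
  - by move=> x Dx; exact: (tb x Dx).2.
rewrite Rintegral_cst; last exact: measurable_itv.
rewrite muDE.
have hn' : (Lr - series rho n) * (K + 1) <= e.
  by rewrite -ler_pdivlMr ?ltr_wpDl//; apply: le_trans hn; rewrite ler_norm.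
have x0 : 0 <= Lr - series rho n by rewrite subr_ge0.
rewrite (_ : B * (Lr - series rho n) * (2 * pi) = K * (Lr - series rho n)); last first.
  by rewrite /K; ring.
nra.
Qed.
End Core.


Lemma pow_ineq (R : realType) (p q : R) k : 0 <= p -> p <= q ->
  p ^+ k * (q - p) / k`!%:R <= (q ^+ k.+1 - p ^+ k.+1) / (k.+1)`!%:R.
Proof.
move=> p0 pq.
have hs : k.+1%:R * p ^+ k <= \sum_(i < k.+1) q ^+ (k.+1.-1 - i) * p ^+ i.
  have -> : k.+1%:R * p ^+ k = \sum_(i < k.+1) p ^+ k.
    by rewrite sumr_const card_ord mulr_natl.
  apply: ler_sum => i _ /=.
  have ik : (i <= k)%N by rewrite -ltnS.
  rewrite -{1}(subnK ik) exprD; apply: ler_wpM2r; first exact: exprn_ge0.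
  by apply: lerXn2r => //; rewrite nnegrE// (le_trans p0 pq).
have key : k.+1%:R * p ^+ k * (q - p) <= q ^+ k.+1 - p ^+ k.+1.
  by rewrite subrXX mulrC; apply: ler_wpM2l => //; rewrite subr_ge0.
have h1 : (k.+1%:R : R) != 0 by rewrite pnatr_eq0.
have h2 : (k`!%:R : R) != 0 by rewrite pnatr_eq0 -lt0n fact_gt0.
rewrite factS natrM.
rewrite ler_pdivlMr ?mulr_gt0 ?ltr0n ?fact_gt0//.
set f := (k`!%:R : R); set k1 := (k.+1%:R : R).
have -> : p ^+ k * (q - p) / f * (k1 * f) = k1 * p ^+ k * (q - p).
  by rewrite [k1 * f]mulrC mulrA divfK //; ring.
exact: key.
Qed.

Lemma unif_n (R : realType) (a t del : R) : a < t -> 0 < del ->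
  exists2 n : nat, (0 < n)%N & (t - a) / n%:R < del.
Proof.
move=> at0 del0; exists (Num.Def.trunc ((t - a) / del)).+1 => //.
rewrite ltr_pdivrMr // mulrC -ltr_pdivrMr//; exact: truncnS_gt.
Qed.

Definition ux (R : realType) (a t : R) (n j : nat) : R := a + j%:R * ((t - a) / n%:R).

Lemma ux_inc (R : realType) (a t : R) n j : a <= t -> ux a t n j <= ux a t n j.+1.
Proof.
move=> at0; rewrite /ux lerD2l ler_wpM2r ?ler_nat//.
by rewrite divr_ge0 ?subr_ge0.
Qed.

Lemma unif_props (R : realType) (a t : R) n : a < t -> (0 < n)%N ->
  let s := mkseq (fun j => ux a t n j.+1) n in
  [/\ is_partition a t s, mesh a s <= (t - a) / n%:R,
      forall j, (j <= n)%N -> nth 0 (a :: s) j = ux a t n j,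
      forall j, (j < n)%N -> nth 0 s j = ux a t n j.+1 &
      forall j, (j <= n)%N -> a <= ux a t n j <= t].
Proof.
move=> at0 n0 s; set x := ux a t n.
have h0 : 0 < (t - a) / n%:R by rewrite divr_gt0 ?subr_gt0// ltr0n.
have nn0 : (n%:R : R) != 0 by rewrite pnatr_eq0 -lt0n.
have xs j : x j.+1 = x j + (t - a) / n%:R by rewrite /x /ux -nat1r mulrDl mul1r; ring.
have ns j : (j < n)%N -> nth 0 s j = x j.+1 by move=> jn; rewrite nth_mkseq.
have nas j : (j <= n)%N -> nth 0 (a :: s) j = x j.
  case: j => [|j] jn /=; first by rewrite /x /ux mul0r addr0.
  by rewrite ns.
have xr j : (j <= n)%N -> a <= x j <= t.
  move=> jn; rewrite /x /ux; apply/andP; split.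
    by rewrite lerDl mulr_ge0 // ltW.
  rewrite -lerBrDl mulrA ler_pdivrMr ?ltr0n // mulrC ler_wpM2l ?ler_nat //.
  by rewrite subr_ge0 ltW.
split => //.
- split.
    apply/(pathP 0) => j; rewrite size_mkseq => jn.
    by rewrite nas; [rewrite ns// xs ltrDl|exact: ltnW].
  rewrite (last_nth 0) size_mkseq nas// /x /ux mulrC divfK// addrC subrK//.
- rewrite /mesh; elim/big_ind: _ => //.
  + exact: ltW.
  + by move=> u v hu hv; rewrite ge_max hu hv.
  move=> j _; rewrite size_mkseq in j *.
  by rewrite ns// nas; [rewrite xs addrC addKr|exact: ltnW].
Qed.

Section Sig.
Variables (R : realType) (d : nat) (g : R -> 'rV[R]_d) (a b M : R).
Hypothesis hM : forall s, is_partition a b s -> path_variation_sum g a s <= M.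
Local Notation pvs := (path_variation_sum g a).

Lemma eucl_norm_ge0 (v : 'rV[R]_d) : 0 <= eucl_norm v.
Proof. by rewrite /eucl_norm sqrtr_ge0. Qed.

Lemma eucl_norm0 : eucl_norm (0 : 'rV[R]_d) = 0.
Proof. by rewrite /eucl_norm big1 ?sqrtr0// => j _; rewrite mxE expr0n. Qed.

Lemma coord_le (v : 'rV[R]_d) i : `|v ord0 i| <= eucl_norm v.
Proof.
rewrite /eucl_norm -sqrtr_sqr ler_sqrt; last by apply: sumr_ge0 => j _; exact: sqr_ge0.
by rewrite (bigD1 i) //= lerDl sumr_ge0 // => j _; exact: sqr_ge0.
Qed.

Lemma pvs_ge0 s : 0 <= pvs s.
Proof. by apply: sumr_ge0 => i _; exact: eucl_norm_ge0. Qed.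

Lemma pvs_rcons s y : pvs (rcons s y) = pvs s + eucl_norm (g y - g (last a s)).
Proof.
rewrite /path_variation_sum size_rcons big_ord_recr /=; congr (_ + _).
  apply: eq_bigr => i _; rewrite -rcons_cons !nth_rcons /= ltn_ord.
  by rewrite ltnS ltnW.
by rewrite -rcons_cons !nth_rcons /= ltnn eqxx ltnSn (last_nth 0).
Qed.

Lemma part_rcons s x y : is_partition a x s -> x < y -> is_partition a y (rcons s y).
Proof. by move=> [ps ls] xy; split; rewrite ?last_rcons// rcons_path ps ls. Qed.

Lemma E_ub x s : x <= b -> is_partition a x s -> pvs s <= M.
Proof.
move=> xb ps; have [xb'|xb'] := eqVneq x b; first by move: ps; rewrite xb'; exact: hM.
have xlt : x < b by rewrite lt_neqAle xb' xb.
apply: le_trans _ (hM (part_rcons ps xlt)); rewrite pvs_rcons lerDl; exact: eucl_norm_ge0.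
Qed.

Definition Evar x : set R := [set pvs s | s in is_partition a x].
Definition var x := sup (Evar x).

Lemma E_ne x : a <= x -> Evar x !=set0.
Proof.
move=> ax; have [<-|ax'] := eqVneq a x.
  by exists (pvs [::]); exists [::].
exists (pvs [:: x]); exists [:: x] => //; split => //=.
by rewrite andbT lt_neqAle ax' ax.
Qed.

Lemma E_hasub x : x <= b -> has_ubound (Evar x).
Proof. by move=> xb; exists M => z [s ps <-]; exact: E_ub ps. Qed.

Lemma var_ub x s : x <= b -> is_partition a x s -> pvs s <= var x.
Proof. by move=> xb ps; apply: (ub_le_sup (E_hasub xb)); exists s. Qed.

Lemma var_ge0 x : a <= x -> x <= b -> 0 <= var x.
Proof.
move=> ax xb; have [z [s ps sz]] := E_ne ax.
exact: le_trans (pvs_ge0 s) (var_ub xb ps).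
Qed.

Lemma var_le x : a <= x -> x <= b -> var x <= M.
Proof. by move=> ax xb; apply: ge_sup (E_ne ax) _ => z [s ps <-]; exact: E_ub ps. Qed.

Lemma var_incr x y : a <= x -> x <= y -> y <= b ->
  var x + eucl_norm (g y - g x) <= var y.
Proof.
move=> ax xy yb; have [<-|xy'] := eqVneq x y; first by rewrite subrr eucl_norm0 addr0.
have xlt : x < y by rewrite lt_neqAle xy' xy.
rewrite -lerBrDr; apply: ge_sup (E_ne ax) _ => z [s ps <-].
rewrite lerBrDr; have := var_ub yb (part_rcons ps xlt).
by rewrite pvs_rcons (proj2 ps).
Qed.

Lemma sig_bound (w : seq 'I_d) t : a <= t -> t <= b ->
  `|sigrev g a w t| <= var t ^+ size w / (size w)`!%:R.
Proof.
elim: w t => [|i w IH] t at0 tb /=.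
  by rewrite normr1 expr0 fact0 divr1.
set k := size w.
rewrite /RSint.
set P := [set I | is_RS_integral _ _ a t I].
have X0 : 0 <= var t ^+ k.+1 / (k.+1)`!%:R by rewrite divr_ge0 // exprn_ge0 // var_ge0.
have [ex|nex] := pselect (exists I, P I); last first.
  by rewrite xgetPN ?normr0 // => I PI; apply: nex; exists I.
have HI := xgetPex 0 ex; set I := xget 0 P in HI *.
apply/ler_addgt0Pr => e e0.
have [del del0 Hd] := HI e e0.
suff [s [xi [ps sx ms tg bd]]] : exists s xi, [/\ is_partition a t s, size xi = size s,
    mesh a s < del,
    (forall j, (j < size s)%N -> nth 0 (a :: s) j <= nth 0 xi j <= nth 0 s j) &
    `|RS_sum (fun u => sigrev g a w u) (fun u => g u ord0 i) a s xi| <=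
       var t ^+ k.+1 / (k.+1)`!%:R].
  have h := Hd s xi ps sx ms tg.
  set RS := RS_sum _ _ _ _ _ in h bd.
  have tri := ler_normB RS (RS - I).
  rewrite (_ : RS - (RS - I) = I) in tri; last by ring.
  apply: le_trans tri _; apply: lerD => //; exact: ltW.
have [ta|ta] := eqVneq a t.
  exists [::], [::]; split; [by split | by [] | by rewrite /mesh big_ord0 | by [] |].
  by rewrite /RS_sum big_ord0 normr0.
have alt : a < t by rewrite lt_neqAle ta at0.
have [n n0 hn] := unif_n alt del0.
have [ps ms nas ns xr] := unif_props alt n0.
have nn0 : (n%:R : R) != 0 by rewrite pnatr_eq0 -lt0n.
have uxn : ux a t n n = t by rewrite /ux mulrC divfK// addrC subrK.
have ux0 : ux a t n 0 = a by rewrite /ux mul0r addr0.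
exists (mkseq (fun j => ux a t n j.+1) n), (mkseq (ux a t n) n).
split => //.
- by rewrite !size_mkseq.
- exact: le_lt_trans ms hn.
- move=> j; rewrite size_mkseq => jn.
  by rewrite (nas j (ltnW jn)) (ns j jn) nth_mkseq // lexx ux_inc.
rewrite /RS_sum size_mkseq.
under eq_bigr => j _ do rewrite (nas j (ltnW (ltn_ord j))) (ns j (ltn_ord j)) nth_mkseq //.
apply: le_trans (ler_norm_sum _ _ _) _.
apply: (@le_trans _ _ (\sum_(j < n) (var (ux a t n j.+1) ^+ k.+1 - var (ux a t n j) ^+ k.+1)
   / (k.+1)`!%:R)).
  apply: ler_sum => j _; rewrite normrM.
  have /andP[xj1 xj2] := xr j (ltnW (ltn_ord j)).
  have /andP[yj1 yj2] := xr j.+1 (ltn_ord j).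
  have xy := ux_inc n j at0.
  have vi := var_incr xj1 xy (le_trans yj2 tb).
  have p0 := var_ge0 xj1 (le_trans xj2 tb).
  have pq : var (ux a t n j) <= var (ux a t n j.+1).
    by apply: le_trans vi; rewrite lerDl eucl_norm_ge0.
  apply: le_trans (pow_ineq k p0 pq); rewrite mulrAC.
  apply: ler_pM => //.
    exact: IH xj1 (le_trans xj2 tb).
  have := coord_le (g (ux a t n j.+1) - g (ux a t n j)) i; rewrite !mxE => h.
  by apply: le_trans h _; rewrite lerBrDl.
rewrite -mulr_suml.
rewrite -(big_mkord xpredT (fun j => var (ux a t n j.+1) ^+ k.+1 - var (ux a t n j) ^+ k.+1)).
rewrite telescope_sumr // uxn ux0; apply: ler_wpM2r; first by rewrite invr_ge0.
have := exprn_ge0 k.+1 (var_ge0 (lexx a) (le_trans at0 tb)); lra.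
Qed.
End Sig.


Section Cplx.
Variable R : realType.
Implicit Types (z : R[i]) (r x y : R).

Lemma ReMC z r : complex.Re (z * r%:C) = complex.Re z * r.
Proof. by case: z => x y /=; ring. Qed.
Lemma ImMC z r : complex.Im (z * r%:C) = complex.Im z * r.
Proof. by case: z => x y /=; ring. Qed.
Lemma ReCM z r : complex.Re (r%:C * z) = r * complex.Re z.
Proof. by case: z => x y /=; ring. Qed.
Lemma ImCM z r : complex.Im (r%:C * z) = r * complex.Im z.
Proof. by case: z => x y /=; ring. Qed.
Lemma ReM z1 z2 : complex.Re (z1 * z2) = complex.Re z1 * complex.Re z2 - complex.Im z1 * complex.Im z2.
Proof. by case: z1 => x y; case: z2 => u v /=. Qed.
Lemma ImM z1 z2 : complex.Im (z1 * z2) = complex.Re z1 * complex.Im z2 + complex.Im z1 * complex.Re z2.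
Proof. by case: z1 => x y; case: z2 => u v /=. Qed.

Lemma Re_sum (I : Type) (s : seq I) (P : pred I) (F : I -> R[i]) :
  complex.Re (\sum_(i <- s | P i) F i) = \sum_(i <- s | P i) complex.Re (F i).
Proof. by apply: (big_morph _ (id1 := 0)) => // -[? ?] [? ?]. Qed.
Lemma Im_sum (I : Type) (s : seq I) (P : pred I) (F : I -> R[i]) :
  complex.Im (\sum_(i <- s | P i) F i) = \sum_(i <- s | P i) complex.Im (F i).
Proof. by apply: (big_morph _ (id1 := 0)) => // -[? ?] [? ?]. Qed.

Lemma expiD x y : expi x * expi y = expi (x + y).
Proof. by rewrite /expi /= cosD sinD; congr (_ +i* _); ring. Qed.

Lemma expiX x k : expi x ^+ k = expi (k%:R * x).
Proof.
elim: k => [|k IH]; first by rewrite expr0 mul0r /expi cos0 sin0.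
by rewrite exprS IH expiD -nat1r mulrDl mul1r addrC.
Qed.

Definition nc z := Num.sqrt (complex.Re z ^+ 2 + complex.Im z ^+ 2).
Lemma ncE z : `|z| = (nc z)%:C. Proof. exact: normc_def. Qed.

Lemma nc_Re z : `|complex.Re z| <= nc z.
Proof.
rewrite /nc -sqrtr_sqr ler_sqrt ?lerDl ?sqr_ge0//.
by rewrite addr_ge0 ?sqr_ge0.
Qed.
Lemma nc_Im z : `|complex.Im z| <= nc z.
Proof.
rewrite /nc -sqrtr_sqr ler_sqrt ?lerDr ?sqr_ge0//.
by rewrite addr_ge0 ?sqr_ge0.
Qed.
Lemma nc_le z : nc z <= `|complex.Re z| + `|complex.Im z|.
Proof.
rewrite /nc; set x := complex.Re z; set y := complex.Im z.
rewrite -[X in _ <= X]ger0_norm ?addr_ge0// -sqrtr_sqr ler_sqrt ?sqr_ge0//.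
rewrite sqrrD -[x ^+ 2]real_normK ?num_real// -[y ^+ 2]real_normK ?num_real//.
have := mulr_ge0 (normr_ge0 x) (normr_ge0 y); lra.
Qed.

Lemma nc_expi x : nc (expi x) = 1.
Proof. by rewrite /nc /expi /= cos2Dsin2 sqrtr1. Qed.

Lemma ReB z1 z2 : complex.Re (z1 - z2) = complex.Re z1 - complex.Re z2.
Proof. by case: z1 => ? ?; case: z2 => ? ?. Qed.
Lemma ImB z1 z2 : complex.Im (z1 - z2) = complex.Im z1 - complex.Im z2.
Proof. by case: z1 => ? ?; case: z2 => ? ?. Qed.

Lemma cvgC_Re (u : nat -> R[i]) l : cvgC u l ->
  (fun n => complex.Re (u n)) @ \oo --> complex.Re l.
Proof.
move=> cu; apply/cvgrPdist_lt => e e0.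
have [N HN] := cu e e0.
exists N => // n /= Nn; have := HN n Nn; rewrite ncE ltcR => h.
rewrite distrC; apply: le_lt_trans h.
by rewrite -ReB; exact: nc_Re.
Qed.
Lemma cvgC_Im (u : nat -> R[i]) l : cvgC u l ->
  (fun n => complex.Im (u n)) @ \oo --> complex.Im l.
Proof.
move=> cu; apply/cvgrPdist_lt => e e0.
have [N HN] := cu e e0.
exists N => // n /= Nn; have := HN n Nn; rewrite ncE ltcR => h.
rewrite distrC; apply: le_lt_trans h.
by rewrite -ImB; exact: nc_Im.
Qed.

Lemma cvgC_uniq (u : nat -> R[i]) l1 l2 : cvgC u l1 -> cvgC u l2 -> l1 = l2.
Proof.
move=> c1 c2.
have r := cvg_unique _ (cvgC_Re c1) (cvgC_Re c2).
have i := cvg_unique _ (cvgC_Im c1) (cvgC_Im c2).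
by apply/eqP; rewrite eq_complex; apply/andP; split; apply/eqP; [exact: r|exact: i].
Qed.

Lemma limC_eq (u : nat -> R[i]) l : cvgC u l -> limC u = l.
Proof.
move=> cu; rewrite /limC; apply: (cvgC_uniq _ cu).
by have := xgetPex 0 (ex_intro (fun l => cvgC u l) l cu).
Qed.

Lemma cvgC_of (u : nat -> R[i]) lr li :
  (fun n => complex.Re (u n)) @ \oo --> lr ->
  (fun n => complex.Im (u n)) @ \oo --> li -> cvgC u (lr +i* li).
Proof.
move=> cr ci e e0.
have e20 : 0 < e / 2 by rewrite divr_gt0.
have := (cvgrPdist_lt _ _).1 cr _ e20; have := (cvgrPdist_lt _ _).1 ci _ e20.
move=> h1 h2; have [N1 _ HN1] := h1; have [N2 _ HN2] := h2.
exists (maxn N1 N2) => n; rewrite geq_max => /andP[n1 n2].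
rewrite ncE ltcR; apply: le_lt_trans (nc_le _) _.
have := HN1 n n1; have := HN2 n n2.
case: (u n) => x y /= hx hy.
rewrite distrC in hx; rewrite distrC in hy; lra.
Qed.
End Cplx.

Section Main.
Variable R : realType.
Local Notation D := (`]-pi, pi[%classic : set R).

Lemma ncM (z1 z2 : R[i]) : nc (z1 * z2) = nc z1 * nc z2.
Proof. by apply: complexI; rewrite rmorphM /= -!ncE normrM. Qed.

Lemma nc_leC (z : R[i]) M : `|z| <= M%:C -> nc z <= M.
Proof. by rewrite ncE lecR. Qed.

Lemma sig_ip_bound d (gamma sigma : R -> 'rV[R]_d) a b M1 M2 :
  (forall s, is_partition a b s -> path_variation_sum gamma a s <= M1) ->
  (forall s, is_partition a b s -> path_variation_sum sigma a s <= M2) ->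
  forall k s t, a <= s -> s <= b -> a <= t -> t <= b ->
  `|sig_ip gamma sigma a k s t| <= exp_coeff (d%:R * M1 * M2) k.
Proof.
move=> h1 h2 k s t as0 sb at0 tb.
have ab := le_trans as0 sb.
have M10 : 0 <= M1 := le_trans (var_ge0 h1 (lexx a) ab) (var_le h1 (lexx a) ab).
have M20 : 0 <= M2 := le_trans (var_ge0 h2 (lexx a) ab) (var_le h2 (lexx a) ab).
have f0 : (0 : R) < k`!%:R by rewrite ltr0n fact_gt0.
have b1 : forall (w : k.-tuple 'I_d), `|sig_coord gamma a w s| <= M1 ^+ k / k`!%:R.
  move=> w; apply: le_trans (sig_bound h1 (rev w) as0 sb) _.
  rewrite size_rev size_tuple; apply: ler_wpM2r; first by rewrite invr_ge0 ltW.
  by apply: (@lerXn2r R k); rewrite ?nnegrE ?(var_ge0 h1) ?(var_le h1).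
have b2 : forall (w : k.-tuple 'I_d), `|sig_coord sigma a w t| <= M2 ^+ k / k`!%:R.
  move=> w; apply: le_trans (sig_bound h2 (rev w) at0 tb) _.
  rewrite size_rev size_tuple; apply: ler_wpM2r; first by rewrite invr_ge0 ltW.
  by apply: (@lerXn2r R k); rewrite ?nnegrE ?(var_ge0 h2) ?(var_le h2).
rewrite /sig_ip; apply: le_trans (ler_norm_sum _ _ _) _.
apply: (@le_trans _ _ (\sum_(w : k.-tuple 'I_d) (M1 ^+ k / k`!%:R * (M2 ^+ k / k`!%:R)))).
  apply: ler_sum => w _; rewrite normrM; apply: ler_pM => //.
rewrite sumr_const card_tuple card_ord -[_ *+ (d ^ k)]mulr_natr natrX /exp_coeff /=.
rewrite !exprMn.
have -> : M1 ^+ k / k`!%:R * (M2 ^+ k / k`!%:R) * d%:R ^+ k =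
   (d%:R ^+ k * M1 ^+ k * M2 ^+ k / k`!%:R) * k`!%:R^-1 by ring.
apply: ler_piMr.
  apply: divr_ge0; last exact: ltW.
  by rewrite !mulr_ge0 // exprn_ge0.
by rewrite invf_le1// ler1n fact_gt0.
Qed.

Lemma sig_ip0 d (gamma sigma : R -> 'rV[R]_d) a s t : sig_ip gamma sigma a 0 s t = 1.
Proof.
rewrite /sig_ip (eq_bigr (fun=> 1)); last first.
  by move=> w _; rewrite tuple0 /sig_coord /= mulr1.
by rewrite sumr_const card_tuple expn0.
Qed.

Lemma Kw_expi (c rho : R^nat) th : (forall k, 0 <= rho k) ->
  (forall k, `|c k| <= rho k) -> cvgn (series rho) ->
  [/\ cvgn (series (fun k => cos (k%:R * th) * c k)),
      cvgn (series (fun k => sin (k%:R * th) * c k)) &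
  limC (fun N => \sum_(k < N) expi th ^+ k * (c k)%:C) =
    limn (series (fun k => cos (k%:R * th) * c k)) +i*
    limn (series (fun k => sin (k%:R * th) * c k))].
Proof.
move=> r0 cr crho.
have [cc _] := @tail_bound _ (fun k => cos (k%:R * th) * c k) rho 1 ler01 r0
  (fun k => ltac:(by rewrite mul1r normrM; apply: le_trans (cr k); rewrite ler_piMl ?cos_max)) crho.
have [cs _] := @tail_bound _ (fun k => sin (k%:R * th) * c k) rho 1 ler01 r0
  (fun k => ltac:(by rewrite mul1r normrM; apply: le_trans (cr k); rewrite ler_piMl ?sin_max)) crho.
split => //; apply: limC_eq; apply: cvgC_of.
  rewrite (_ : (fun n => _) = series (fun k => cos (k%:R * th) * c k)) //.
  apply/funext => n; rewrite Re_sum seriesEord /=; apply: eq_bigr => k _.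
  by rewrite ReMC expiX.
rewrite (_ : (fun n => _) = series (fun k => sin (k%:R * th) * c k)) //.
apply/funext => n; rewrite Im_sum seriesEord /=; apply: eq_bigr => k _.
by rewrite ImMC expiX.
Qed.

Lemma meas_trig (k : R) : measurable_fun D (fun x => cos (k * x)) /\
  measurable_fun D (fun x => sin (k * x)).
Proof.
have mk : measurable_fun D (fun x : R => k * x).
  exact: (measurable_realfun.measurable_funM (measurable_cst k) (@measurable_id _ _ D)).
split.
  exact: (measurableT_comp (measurable_realfun.continuous_measurable_fun (@continuous_cos R)) mk).
exact: (measurableT_comp (measurable_realfun.continuous_measurable_fun (@continuous_sin R)) mk).
Qed.
End Main.

Section Part2.
Variable R : realType.
Local Notation D := (`]-pi, pi[%classic : set R).
Local Notation mu := (@lebesgue_measure R).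

Lemma zero_in_D : D 0.
Proof. by rewrite /= in_itv /= oppr_lt0 pi_gt0. Qed.

Lemma part2 d (gamma sigma : R -> 'rV[R]_d) a b M1 M2 :
  (forall s, is_partition a b s -> path_variation_sum gamma a s <= M1) ->
  (forall s, is_partition a b s -> path_variation_sum sigma a s <= M2) ->
  forall (f : R -> R) Mf, (forall x, x \in `]-pi, pi[ -> `|f x| <= Mf) ->
  mu.-integrable `]-pi, pi[%classic (fun x => (f x)%:E) ->
  forall s t, a <= s -> s <= b -> a <= t -> t <= b ->
  K_phi_real f gamma sigma a s t =
   pi^-1 * int_pi (fun x => complex.Re (K_w (expi x) gamma sigma a s t) * f x)
   - fourier_a f 0.
Proof.
move=> h1 h2 f Mf hf iF s t as0 sb at0 tb.
pose c := fun k => sig_ip gamma sigma a k s t.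
have ab := le_trans as0 sb.
have M10 : 0 <= M1 := le_trans (var_ge0 h1 (lexx a) ab) (var_le h1 (lexx a) ab).
have M20 : 0 <= M2 := le_trans (var_ge0 h2 (lexx a) ab) (var_le h2 (lexx a) ab).
pose C := d%:R * M1 * M2.
have C0 : 0 <= C by rewrite /C !mulr_ge0.
pose rho := exp_coeff C.
have r0 k : 0 <= rho k by exact: exp_coeff_ge0.
have cr k : `|c k| <= rho k by have := sig_ip_bound h1 h2 k as0 sb at0 tb.
have crho : cvgn (series rho) by exact: is_cvg_series_exp_coeff.
have mf : measurable_fun D f by apply/measurable_realfun.measurable_EFinP; exact: (measurable_int mu iF).
pose h := fun (k : nat) x => f x * cos (k%:R * x).
have mh k : measurable_fun D (h k).
  exact: (measurable_realfun.measurable_funM mf (meas_trig k%:R).1).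
have hB k x : D x -> `|h k x| <= Mf.
  by move=> Dx; rewrite normrM; apply: le_trans (hf x Dx); rewrite ler_piMr ?cos_max.
have Mf0 : 0 <= Mf by apply: le_trans (hf 0 zero_in_D).
have [_ cI] := core Mf0 r0 cr crho mh hB.
pose H := fun x => limn (series (fun k => c k * h k x)).
have KE x : K_w (expi x) gamma sigma a s t =
   limn (series (fun k => cos (k%:R * x) * c k)) +i*
   limn (series (fun k => sin (k%:R * x) * c k)).
  by case: (Kw_expi x r0 cr crho) => _ _ e; exact: e.
have eqH : int_pi (fun x => complex.Re (K_w (expi x) gamma sigma a s t) * f x) = int_pi H.
  apply: eq_Rintegral => x Dx; rewrite KE /= /H.
  have [cc _ _] := Kw_expi x r0 cr crho.
  have e1 : series (fun k => c k * h k x) =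
      (fun N => f x * series (fun k => cos (k%:R * x) * c k) N).
    apply/funext => N; rewrite !seriesEord /= mulr_sumr; apply: eq_bigr => k _.
    by rewrite /h; ring.
  rewrite e1 mulrC; apply/esym; apply: cvg_lim => //; exact: cvgMl_tmp cc.
have eqN N : \sum_(k < N.+1) fourier_a f k * c k =
    pi^-1 * series (fun k => c k * int_pi (h k)) N.+1 - fourier_a f 0.
  rewrite big_ord_recl seriesEord /= big_ord_recl /=.
  have -> : c 0%N = 1 by exact: sig_ip0.
  have -> : int_pi (h 0%N) = int_pi f.
    by congr Rintegral; apply/funext => x; rewrite /h mul0r cos0 mulr1.
  rewrite mulrDr mulr_sumr.
  have -> : \sum_(i < N) fourier_a f (bump 0 i) * c (bump 0 i) =
      \sum_(i < N) pi^-1 * (c (bump 0 i) * int_pi (h (bump 0 i))).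
    by apply: eq_bigr => i _; rewrite /fourier_a /=; ring.
  rewrite /fourier_a /= invfM.
  set I0 := int_pi f; set S := \sum_(i < N) _.
  have p0 : pi != 0 :> R by rewrite gt_eqF // pi_gt0.
  lra.
have conv : (fun N => \sum_(k < N.+1) fourier_a f k * c k) @ \oo -->
    pi^-1 * int_pi H - fourier_a f 0.
  rewrite (_ : (fun N => _) = (fun N => pi^-1 * series (fun k => c k * int_pi (h k)) N.+1
     - fourier_a f 0)); last by apply/funext => N; exact: eqN.
  apply: cvgB; last exact: cvg_cst.
  apply: cvgMl_tmp.
  by move: cI; rewrite -(cvg_shiftS (series (fun k => c k * int_pi (h k)))).
rewrite eqH /K_phi_real; apply: cvg_lim => //.
by move: conv; rewrite (cvg_shiftS (fun N => \sum_(k < N) fourier_a f k * c k)).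
Qed.
End Part2.

Section Part1.
Variable R : realType.
Local Notation D := (`]-pi, pi[%classic : set R).
Local Notation mu := (@lebesgue_measure R).

Lemma reindexP (F : int -> R[i]) (G : nat -> R[i]) N :
  (forall k : int, k < 0 -> F k = 0) ->
  \sum_(i < (2 * N).+1) F (i%:Z - N%:Z) * G `|i%:Z - N%:Z|%N =
  \sum_(k < N.+1) F k%:Z * G k.
Proof.
move=> F0.
rewrite -(big_mkord xpredT (fun i => F (i%:Z - N%:Z) * G `|i%:Z - N%:Z|%N)).
rewrite (big_cat_nat _ (n := N)) //=; last by rewrite ltnW // ltnS mul2n -addnn leq_addl.
rewrite big_nat big1 ?add0r; last first.
  by move=> i /andP[_ iN]; rewrite F0 ?mul0r // subr_lt0 ltz_nat.
rewrite -{1}(add0n N) big_addn.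
have -> : ((2 * N).+1 - N = N.+1)%N by rewrite mul2n -addnn -addSn addnK.
rewrite big_mkord; apply: eq_bigr => i _.
by rewrite PoszD addrK absz_nat.
Qed.

Lemma part1 d (gamma sigma : R -> 'rV[R]_d) a b M1 M2 :
  (forall s, is_partition a b s -> path_variation_sum gamma a s <= M1) ->
  (forall s, is_partition a b s -> path_variation_sum sigma a s <= M2) ->
  forall f : R -> R[i], forall Mf, (forall x, x \in `]-pi, pi[ -> `|f x| <= Mf%:C) ->
     mu.-integrable `]-pi, pi[%classic (fun x => (complex.Re (f x))%:E) ->
     mu.-integrable `]-pi, pi[%classic (fun x => (complex.Im (f x))%:E) ->
     (forall k : int, k < 0 -> fourier_coef f k = 0) ->
     forall s t, a <= s -> s <= b -> a <= t -> t <= b ->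
       K_phi (fourier_coef f) gamma sigma a s t =
       ((2 * pi)^-1)%:C *
         int_piC (fun x => K_w (expi (- x)) gamma sigma a s t * f x).
Proof.
move=> h1 h2 f Mf hf iRe iIm phi0 s t as0 sb at0 tb.
pose c := fun k => sig_ip gamma sigma a k s t.
have ab := le_trans as0 sb.
have M10 : 0 <= M1 := le_trans (var_ge0 h1 (lexx a) ab) (var_le h1 (lexx a) ab).
have M20 : 0 <= M2 := le_trans (var_ge0 h2 (lexx a) ab) (var_le h2 (lexx a) ab).
pose C := d%:R * M1 * M2.
have C0 : 0 <= C by rewrite /C !mulr_ge0.
pose rho := exp_coeff C.
have r0 k : 0 <= rho k by exact: exp_coeff_ge0.
have cr k : `|c k| <= rho k by have := sig_ip_bound h1 h2 k as0 sb at0 tb.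
have crho : cvgn (series rho) by exact: is_cvg_series_exp_coeff.
have mRe : measurable_fun D (fun x => complex.Re (f x)).
  by apply/measurable_realfun.measurable_EFinP; exact: (measurable_int mu iRe).
have mIm : measurable_fun D (fun x => complex.Im (f x)).
  by apply/measurable_realfun.measurable_EFinP; exact: (measurable_int mu iIm).
have ncf x : D x -> nc (f x) <= Mf by move=> Dx; apply: nc_leC; exact: hf.
have Mf0 : 0 <= Mf by apply: le_trans _ (ncf 0 (@zero_in_D R)); rewrite /nc sqrtr_ge0.
have mcs (k : nat) : measurable_fun D (fun x => cos (k%:R * - x)) /\
    measurable_fun D (fun x => sin (k%:R * - x)).
  have [m1 m2] := @meas_trig R (- k%:R).
  by split; [move: m1 | move: m2]; congr measurable_fun; apply/funext => x; rewrite mulrN mulNr.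
pose hR := fun (k : nat) x => complex.Re (f x) * cos (k%:R * - x) - complex.Im (f x) * sin (k%:R * - x).
pose hI := fun (k : nat) x => complex.Re (f x) * sin (k%:R * - x) + complex.Im (f x) * cos (k%:R * - x).
have hRE k x : hR k x = complex.Re (f x * expi (- (k%:R * x))).
  by rewrite ReM /expi /= /hR mulrN.
have hIE k x : hI k x = complex.Im (f x * expi (- (k%:R * x))).
  by rewrite ImM /expi /= /hI mulrN; ring.
have mhR k : measurable_fun D (hR k).
  apply: measurable_realfun.measurable_funB.
    exact: (measurable_realfun.measurable_funM mRe (mcs k).1).
  exact: (measurable_realfun.measurable_funM mIm (mcs k).2).
have mhI k : measurable_fun D (hI k).
  apply: measurable_realfun.measurable_funD.
    exact: (measurable_realfun.measurable_funM mRe (mcs k).2).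
  exact: (measurable_realfun.measurable_funM mIm (mcs k).1).
have hRB k x : D x -> `|hR k x| <= Mf.
  move=> Dx; rewrite hRE; apply: le_trans (nc_Re _) _.
  by rewrite ncM nc_expi mulr1; exact: ncf.
have hIB k x : D x -> `|hI k x| <= Mf.
  move=> Dx; rewrite hIE; apply: le_trans (nc_Im _) _.
  by rewrite ncM nc_expi mulr1; exact: ncf.
have [_ cIR] := core Mf0 r0 cr crho mhR hRB.
have [_ cII] := core Mf0 r0 cr crho mhI hIB.
pose HR := fun x => limn (series (fun k => c k * hR k x)).
pose HI := fun x => limn (series (fun k => c k * hI k x)).
pose r := (2 * pi)^-1 : R.
have phiE (k : nat) : fourier_coef f k%:Z =
    (r * int_pi (hR k)) +i* (r * int_pi (hI k)).
  rewrite /fourier_coef /int_piC.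
  have -> : int_pi (hR k) = int_pi (fun x => complex.Re (f x * expi (- ((k%:Z)%:~R * x)))).
    by congr Rintegral; apply/funext => x; rewrite hRE.
  have -> : int_pi (hI k) = int_pi (fun x => complex.Im (f x * expi (- ((k%:Z)%:~R * x)))).
    by congr Rintegral; apply/funext => x; rewrite hIE.
  by rewrite /r /=; congr (_ +i* _); ring.
have LHS : K_phi (fourier_coef f) gamma sigma a s t =
    (r * int_pi HR) +i* (r * int_pi HI).
  rewrite /K_phi; apply: limC_eq.
  under [fun N => _]funext => N do rewrite (reindexP (fun k => (c k)%:C) _ phi0).
  apply: cvgC_of.
    rewrite (_ : (fun n => _) = (fun N => r * series (fun k => c k * int_pi (hR k)) N.+1)).
      apply: cvgMl_tmp.
      by move: cIR; rewrite -(cvg_shiftS (series (fun k => c k * int_pi (hR k)))).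
    apply/funext => N; rewrite Re_sum seriesEord mulr_sumr; apply: eq_bigr => k _.
    by rewrite ReMC phiE /=; ring.
  rewrite (_ : (fun n => _) = (fun N => r * series (fun k => c k * int_pi (hI k)) N.+1)).
    apply: cvgMl_tmp.
    by move: cII; rewrite -(cvg_shiftS (series (fun k => c k * int_pi (hI k)))).
  apply/funext => N; rewrite Im_sum seriesEord mulr_sumr; apply: eq_bigr => k _.
  by rewrite ImMC phiE /=; ring.
have KE x : D x -> K_w (expi (- x)) gamma sigma a s t * f x =
    HR x +i* HI x.
  move=> Dx.
  have [cc cs e] := Kw_expi (- x) r0 cr crho.
  have -> : K_w (expi (- x)) gamma sigma a s t =
      limn (series (fun k => cos (k%:R * - x) * c k)) +i*
      limn (series (fun k => sin (k%:R * - x) * c k)) by exact: e.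
  set LC := limn _; set LS := limn _.
  have eR : series (fun k => c k * hR k x) = (fun N =>
      complex.Re (f x) * series (fun k => cos (k%:R * - x) * c k) N -
      complex.Im (f x) * series (fun k => sin (k%:R * - x) * c k) N).
    apply/funext => N; rewrite !seriesEord /= !mulr_sumr -sumrB.
    by apply: eq_bigr => k _; rewrite /hR; ring.
  have eI : series (fun k => c k * hI k x) = (fun N =>
      complex.Re (f x) * series (fun k => sin (k%:R * - x) * c k) N +
      complex.Im (f x) * series (fun k => cos (k%:R * - x) * c k) N).
    apply/funext => N; rewrite !seriesEord /= !mulr_sumr -big_split.
    by apply: eq_bigr => k _; rewrite /hI /=; ring.
  have HRE : HR x = complex.Re (f x) * LC - complex.Im (f x) * LS.
    rewrite /HR eR; apply: cvg_lim => //.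
    by apply: cvgB; apply: cvgMl_tmp.
  have HIE : HI x = complex.Re (f x) * LS + complex.Im (f x) * LC.
    rewrite /HI eI; apply: cvg_lim => //.
    by apply: cvgD; apply: cvgMl_tmp.
  rewrite HRE HIE.
  by case: (f x) => u v /=; congr (_ +i* _); ring.
have eR : int_pi (fun x => complex.Re (K_w (expi (- x)) gamma sigma a s t * f x)) = int_pi HR.
  by apply: eq_Rintegral => x; rewrite inE => Dx; rewrite KE.
have eI : int_pi (fun x => complex.Im (K_w (expi (- x)) gamma sigma a s t * f x)) = int_pi HI.
  by apply: eq_Rintegral => x; rewrite inE => Dx; rewrite KE.
rewrite LHS /int_piC eR eI /r /=; congr (_ +i* _); ring.
Qed.
End Part1.

Unset Implicit Arguments.

Theorem mainTheorem9 (R : realType) (d : nat) (gamma sigma : R -> 'rV[R]_d)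
  (a b : R) :
  {within `[a, b], continuous gamma} ->
  {within `[a, b], continuous sigma} ->
  bounded_variation_path gamma a b ->
  bounded_variation_path sigma a b ->
  (* (1) *)
  (forall f : R -> R[i],
     (exists M : R, forall x, x \in `]-pi, pi[ -> `|f x| <= M%:C) ->
     (@lebesgue_measure R).-integrable `]-pi, pi[%classic
        (fun x => (complex.Re (f x))%:E) ->
     (@lebesgue_measure R).-integrable `]-pi, pi[%classic
        (fun x => (complex.Im (f x))%:E) ->
     (forall k : int, k < 0 -> fourier_coef f k = 0) ->
     forall s t, s \in `[a, b] -> t \in `[a, b] ->
       K_phi (fourier_coef f) gamma sigma a s t =
       ((2 * pi)^-1)%:C *
         int_piC (fun x => K_w (expi (- x)) gamma sigma a s t * f x)) /\
  (* (2) *)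
  (forall f : R -> R,
     (exists M : R, forall x, x \in `]-pi, pi[ -> `|f x| <= M) ->
     (@lebesgue_measure R).-integrable `]-pi, pi[%classic (fun x => (f x)%:E) ->
     forall s t, s \in `[a, b] -> t \in `[a, b] ->
       K_phi_real f gamma sigma a s t =
       pi^-1 * int_pi (fun x => complex.Re (K_w (expi x) gamma sigma a s t) * f x)
       - fourier_a f 0).
Proof.
move=> _ _ [M1 h1] [M2 h2]; split.
- move=> f [Mf hf] iRe iIm phi0 s t; rewrite !in_itv /= => /andP[as0 sb] /andP[at0 tb].
  exact: (part1 h1 h2 hf iRe iIm phi0 as0 sb at0 tb).
- move=> f [Mf hf] iF s t; rewrite !in_itv /= => /andP[as0 sb] /andP[at0 tb].
  exact: (part2 h1 h2 hf iF as0 sb at0 tb).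
Qed.
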